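(* Let $\mathcal{S}$, $\mathcal{A}$, $\mathcal{M}$ be finite sets, $T\ge 0$ a horizon, $p(m)$ a distribution on $\mathcal{M}$, and $p_E(\tau)$ a distribution on trajectories $\tau=(s^0,a^0,\dots,s^T,a^T)\in(\mathcal{S}\times\mathcal{A})^{T+1}$. Let $f_\omega(s,a,\mu,m)\in\mathbb{R}$ be a reward model differentiable in its parameter $\omega$ and in the mean-field argument $\mu\in\Delta(\mathcal{S})$, and let $q_\psi(m\mid\tau)$ be a context inference model differentiable in its parameter $\psi$. Define, for $t=0,\dots,T$, $s\in\mathcal{S}$, $m\in\mathcal{M}$, $$\hat\mu_\psi^t(s\mid m)=\mathbb{E}_{\tau_E\sim p_E(\tau)}\big[q_\psi(m\mid\tau_E)\,\mathbb{1}_{\{s_E^t=s\}}\big],$$ assumed positive, and the energy-based conditional trajectory distribution $$p_{\omega,\psi}(\tau\mid m)=\frac{1}{Z(\omega,\psi)}\Big[\prod_{t=0}^T\hat\mu_\psi^t(s^t\mid m)\Big]\exp\Big(\sum_{t=0}^T f_\omega\big(s^t,a^t,\hat\mu_\psi^t(\cdot\mid m),m\big)\Big),$$ where $Z(\omega,\psi)$ is the normalising constant (the sum of the unnormalised expression over all trajectories). Let $$\mathcal{L}(\omega,\psi)=\mathbb{E}_{m\sim p(m),\,\tau\sim p_{\omega,\psi}(\tau\mid m)}\big[\log q_\psi(m\mid\tau)\big].$$ Suppose $\pi^*_\theta$ is a policy flow such that the trajectory distribution $p_{\hat\mu_\psi,\pi^*_\theta}(\tau\mid m)$ induced by $(\hat\mu_\psi(\cdot\mid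 m),\pi^*_\theta(\cdot\mid\cdot,m))$ equals $p_{\omega,\psi}(\tau\mid m)$ for every $m$. Write $f_\omega$ for $f_\omega(s^t,a^t,\hat\mu_\psi^t(\cdot\mid m),m)$ and let $\kappa(\tau,m)=\frac{\partial}{\partial\psi}\sum_{t=0}^T\big[f_\omega(s^t,a^t,\hat\mu_\psi^t(\cdot\mid m),m)+\log\hat\mu_\psi^t(s^t\mid m)\big]$, i.e. $\kappa(\tau,m)=\sum_{t=0}^T\big(\frac{\partial f_\omega}{\partial\hat\mu_\psi^t}+\frac{1}{\hat\mu_\psi^t(s^t\mid m)}\big)\frac{\partial\hat\mu_\psi^t(s^t\mid m)}{\partial\psi}$. Then, with $m\sim p(m)$ and $\hat\tau,\hat\tau'$ independent samples from $p_{\hat\mu_\psi,\pi^*_\theta}(\tau\mid m)$, $$\frac{\partial\mathcal{L}}{\partial\omega}=\mathbb{E}_{m,\hat\tau}\Big[\log q_\psi(m\mid\hat\tau)\Big(\sum_{t=0}^T\frac{\partial f_\omega}{\partial\omega}(\hat\tau)-\mathbb{E}_{\hat\tau'}\Big[\sum_{t=0}^T\frac{\partial f_\omega}{\partial\omega}(\hat\tau')\Big]\Big)\Big]$$ and $$\frac{\partial\mathcal{L}}{\partial\psi}=\mathbb{E}_{m,\hat\tau}\Big[\log q_\psi(m\mid\hat\tau)\big(\kappa(\hat\tau,m)-\mathbb{E}_{\hat\tau'}[\kappa(\hat\tau',m)]\big)+\frac{\partial\log q_\psi(m\mid\hat\tau)}{\partial\psi}\Big].$$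
   Context: This is set in mean field games with a latent context variable $m$: $\hat\mu_\psi^t(\cdot\mid m)$ is an estimate of the $m$-conditioned mean field at time $t$ built from expert trajectories weighted by the inferred context probabilities, and $p_E(\tau)$ is the marginal (over contexts) distribution of expert trajectories. The trajectory distribution induced by a mean field flow $\mu$ and policy flow $\pi$ conditioned on $m$ is $\prod_t \mu^t(s^t\mid m)\pi^t(a^t\mid s^t,m)$ when the flows are consistent. The paper phrases the conclusion as ''the gradients can be estimated with'' these expectations. *)

(* Defs.v *)
From HB Require Import structures.
From mathcomp Require Import all_boot all_order all_algebra.
From mathcomp Require Import all_classical all_reals all_analysis.
Set Implicit Arguments. Unset Strict Implicit. Unset Printing Implicit Defensive.
Import Order.TTheory GRing.Theory Num.Theory.
Import numFieldNormedType.Exports.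
Local Open Scope ring_scope.

Definition traj (S A : finType) (T : nat) := {ffun 'I_T.+1 -> S * A}.
Definition stt (S A : finType) (T : nat) (tau : traj S A T) (t : 'I_T.+1) : S :=
  (tau t).1.
Definition act (S A : finType) (T : nat) (tau : traj S A T) (t : 'I_T.+1) : A :=
  (tau t).2.

Definition is_dist (R : realType) (X : finType) (p : X -> R) : Prop :=
  (forall x, 0 <= p x) /\ \sum_(x : X) p x = 1.

Definition evec (R : realType) (n : nat) (i : 'I_n) : 'rV[R]_n := delta_mx 0 i.
Arguments evec {R n} i.

Definition muhat (R : realType) (S A M : finType) (T dq : nat)
    (pE : traj S A T -> R) (q : 'rV[R]_dq -> traj S A T -> M -> R)
    (psi : 'rV[R]_dq) (t : 'I_T.+1) (s : S) (m : M) : R :=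
  \sum_(tau : traj S A T) pE tau * q psi tau m * (stt tau t == s)%:R.

Definition muhat_vec (R : realType) (S A M : finType) (T dq : nat)
    (pE : traj S A T -> R) (q : 'rV[R]_dq -> traj S A T -> M -> R)
    (psi : 'rV[R]_dq) (t : 'I_T.+1) (m : M) : 'rV[R]_#|S| :=
  \row_(i < #|S|) muhat pE q psi t (enum_val i) m.

Definition unnorm (R : realType) (S A M : finType) (T dq dw : nat)
    (pE : traj S A T -> R) (q : 'rV[R]_dq -> traj S A T -> M -> R)
    (f : 'rV[R]_dw -> S -> A -> 'rV[R]_#|S| -> M -> R)
    (w : 'rV[R]_dw) (psi : 'rV[R]_dq) (tau : traj S A T) (m : M) : R :=
  (\prod_(t < T.+1) muhat pE q psi t (stt tau t) m) *
  expR (\sum_(t < T.+1) f w (stt tau t) (act tau t) (muhat_vec pE q psi t m) m).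

Definition Znorm (R : realType) (S A M : finType) (T dq dw : nat)
    (pE : traj S A T -> R) (q : 'rV[R]_dq -> traj S A T -> M -> R)
    (f : 'rV[R]_dw -> S -> A -> 'rV[R]_#|S| -> M -> R)
    (w : 'rV[R]_dw) (psi : 'rV[R]_dq) (m : M) : R :=
  \sum_(tau : traj S A T) unnorm pE q f w psi tau m.

Definition p_ebm (R : realType) (S A M : finType) (T dq dw : nat)
    (pE : traj S A T -> R) (q : 'rV[R]_dq -> traj S A T -> M -> R)
    (f : 'rV[R]_dw -> S -> A -> 'rV[R]_#|S| -> M -> R)
    (w : 'rV[R]_dw) (psi : 'rV[R]_dq) (tau : traj S A T) (m : M) : R :=
  unnorm pE q f w psi tau m / Znorm pE q f w psi m.

Definition Lobj (R : realType) (S A M : finType) (T dq dw : nat)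
    (p : M -> R) (pE : traj S A T -> R) (q : 'rV[R]_dq -> traj S A T -> M -> R)
    (f : 'rV[R]_dw -> S -> A -> 'rV[R]_#|S| -> M -> R)
    (w : 'rV[R]_dw) (psi : 'rV[R]_dq) : R :=
  \sum_(m : M) p m *
    \sum_(tau : traj S A T) p_ebm pE q f w psi tau m * ln (q psi tau m).

Definition policy_flow (R : realType) (S A M : finType) (T : nat)
    (pi : 'I_T.+1 -> S -> M -> A -> R) : Prop :=
  forall t s m, is_dist (pi t s m).

Definition traj_dist (R : realType) (S A M : finType) (T : nat)
    (mu : 'I_T.+1 -> S -> M -> R) (pi : 'I_T.+1 -> S -> M -> A -> R)
    (tau : traj S A T) (m : M) : R :=
  \prod_(t < T.+1) (mu t (stt tau t) m * pi t (stt tau t) m (act tau t)).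

(* Main.v *)
Require Import Defs.
From HB Require Import structures.
From mathcomp Require Import all_boot all_order all_algebra.
From mathcomp Require Import all_classical all_reals all_analysis.
From mathcomp Require Import ring.
Import Order.TTheory GRing.Theory Num.Theory.
Import numFieldNormedType.Exports.
Local Open Scope ring_scope.

Section Helpers.
Variables (R : realType) (V : normedModType R).

Lemma seq_diff (W : normedModType R) (I : eqType) (s : seq I) (h : I -> V -> W) x :
  (forall i, differentiable (h i) x) ->
  differentiable (fun y => \sum_(i <- s) h i y) x.
Proof.
move=> dh; elim: s => [|a s IH].
  have -> : (fun y => \sum_(i <- [::]) h i y) = cst 0.
    by apply/funext => y; rewrite big_nil.
  exact: differentiable_cst.
have -> : (fun y => \sum_(i <- a :: s) h i y) = h a + (fun y => \sum_(i <- s) h i y).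
  by apply/funext => y; rewrite big_cons.
exact: differentiableD.
Qed.

Lemma seq_derive (I : eqType) (s : seq I) (h : I -> V -> R) x v :
  (forall i, differentiable (h i) x) ->
  'D_v (fun y => \sum_(i <- s) h i y) x = \sum_(i <- s) 'D_v (h i) x.
Proof.
move=> dh; elim: s => [|a s IH].
  have -> : (fun y => \sum_(i <- [::]) h i y) = cst 0.
    by apply/funext => y; rewrite big_nil.
  by rewrite derive_cst big_nil.
have -> : (fun y => \sum_(i <- a :: s) h i y) = h a + (fun y => \sum_(i <- s) h i y).
  by apply/funext => y; rewrite big_cons.
rewrite deriveD ?IH ?big_cons //; apply: diff_derivable => //.
exact: seq_diff.
Qed.

Lemma big_diff (W : normedModType R) (I : finType) (h : I -> V -> W) x :
  (forall i, differentiable (h i) x) ->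
  differentiable (fun y => \sum_(i : I) h i y) x.
Proof.
move=> dh; have -> : (fun y => \sum_(i : I) h i y) = (fun y => \sum_(i <- enum I) h i y).
  by apply/funext => y; rewrite big_enum.
exact: seq_diff.
Qed.

Lemma big_derive (I : finType) (h : I -> V -> R) x v :
  (forall i, differentiable (h i) x) ->
  'D_v (fun y => \sum_(i : I) h i y) x = \sum_(i : I) 'D_v (h i) x.
Proof.
move=> dh; have -> : (fun y => \sum_(i : I) h i y) = (fun y => \sum_(i <- enum I) h i y).
  by apply/funext => y; rewrite big_enum.
by rewrite seq_derive // big_enum.
Qed.

Lemma diffMc (r : R) (F : V -> R) x : differentiable F x ->
  differentiable (fun y => r * F y) x.
Proof. move=> dF; exact: (differentiableM (differentiable_cst r x) dF). Qed.

Lemma diffMc' (r : R) (F : V -> R) x : differentiable F x ->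
  differentiable (fun y => F y * r) x.
Proof. move=> dF; exact: (differentiableM dF (differentiable_cst r x)). Qed.

Lemma deriveMc (r : R) (F : V -> R) x v : differentiable F x ->
  'D_v (fun y => r * F y) x = r * 'D_v F x.
Proof.
move=> dF; have -> : (fun y => r * F y) = cst r * F by [].
have d1 := derivable_cst r x v; have d2 := @diff_derivable _ _ _ _ _ v dF.
by rewrite deriveM // derive_cst scaler0 addr0.
Qed.

Lemma deriveDc (c : R) (F : V -> R) x v : differentiable F x ->
  'D_v (fun y => F y + c) x = 'D_v F x.
Proof.
move=> dF; have -> : (fun y => F y + c) = F + cst c by [].
have d1 := derivable_cst c x v; have d2 := @diff_derivable _ _ _ _ _ v dF.
by rewrite deriveD // derive_cst addr0.
Qed.

Lemma comp_R (g : V -> R) (h : R -> R) x d v :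
  differentiable g x -> is_derive (g x) 1 h d ->
  differentiable (fun y => h (g y)) x /\ 'D_v (fun y => h (g y)) x = d * 'D_v g x.
Proof.
move=> dg hd.
have dh : differentiable h (g x) by apply/derivable1_diffP; case: hd.
have dc : differentiable (h \o g) x by exact: differentiable_comp.
split; first exact: dc.
rewrite (deriveE v dc) (diff_comp dg dh) /= (deriveE v dg).
rewrite deriv1E; last by case: hd.
by rewrite /= derive1E derive_val mulrC.
Qed.

End Helpers.

Lemma quot_derive (R : realType) (V : normedModType R) (I : finType)
  (u c : I -> V -> R) (k : I -> R) (x v : V) :
  (forall i, differentiable (u i) x) ->
  (forall i, 'D_v (u i) x = u i x * k i) ->
  (forall i, differentiable (c i) x) ->
  (forall i, 0 < u i x) ->
  differentiable (fun y => \sum_i u i y / (\sum_j u j y) * c i y) x /\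
  'D_v (fun y => \sum_i u i y / (\sum_j u j y) * c i y) x =
  \sum_i (u i x / (\sum_j u j x)) *
     (c i x * (k i - \sum_j (u j x / (\sum_l u l x)) * k j) + 'D_v (c i) x).
Proof.
move=> du Du dc pos.
case: (pickP (@predT I)) => [i0 _ | none]; last first.
  have E : forall (G : I -> R), \sum_i G i = 0.
    by move=> G; rewrite big_pred0.
  have -> : (fun y => \sum_i u i y / (\sum_j u j y) * c i y) = cst 0.
    by apply/funext => y; rewrite E.
  by rewrite derive_cst E; split => //; exact: differentiable_cst.
set Z := fun y => \sum_j u j y.
have dZ : differentiable Z x by exact: big_diff.
have Zpos : 0 < Z x.
  rewrite /Z (bigD1 i0) //=; apply: ltr_pwDl; first exact: pos.
  by apply: sumr_ge0 => i _; apply: ltW.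
have Z0 : Z x != 0 by rewrite gt_eqF.
have dZi : differentiable (fun y => (Z y)^-1) x by exact: differentiableV.
have DZ : 'D_v Z x = \sum_j u j x * k j by rewrite /Z big_derive //; apply: eq_bigr.
have dG : forall i, differentiable (u i * (fun y => (Z y)^-1) * c i) x.
  by move=> i; apply: differentiableM => //; apply: differentiableM.
have -> : (fun y => \sum_i u i y / Z y * c i y) =
          (fun y => \sum_i (u i * (fun y => (Z y)^-1) * c i) y) by [].
split; first exact: big_diff.
rewrite big_derive //; apply: eq_bigr => i _.
have dd : forall (g : V -> R), differentiable g x -> derivable g x v.
  by move=> g dg; exact: diff_derivable.
rewrite deriveM; [|apply: dd; exact: differentiableM | exact: dd].
rewrite deriveM; [|exact: dd | exact: dd].
rewrite deriveV //; last exact: dd.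
rewrite DZ Du /=.
have -> : \sum_j u j x / Z x * k j = (Z x)^-1 * \sum_j u j x * k j.
  by rewrite mulr_sumr; apply: eq_bigr => j _; ring.
rewrite /GRing.scale /=.
rewrite [(u i * _) x]/= -/(Z x).
move: (\sum_j u j x * k j) ('D_v (c i) x) => S D.
change ((u i * _) x) with (u i x * (Z x)^-1).
move: (Z x) Z0 (u i x) (c i x) (k i) => z z0 a b kk.
by field.

Qed.

Lemma unnorm_exp (R : realType) (S A M : finType) (T dq dw : nat)
    (pE : traj S A T -> R) (q : 'rV[R]_dq -> traj S A T -> M -> R)
    (f : 'rV[R]_dw -> S -> A -> 'rV[R]_#|S| -> M -> R) w psi tau m :
  (forall t s, 0 < muhat pE q psi t s m) ->
  unnorm pE q f w psi tau m =
  expR (\sum_(t < T.+1) (f w (stt tau t) (act tau t) (muhat_vec pE q psi t m) m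
         + ln (muhat pE q psi t (stt tau t) m))).
Proof.
move=> mpos; rewrite /unnorm expR_sum.
rewrite -big_split /= expR_sum; apply: eq_bigr => t _.
rewrite expRD lnK; first exact: mulrC.
by rewrite posrE; exact: mpos.
Qed.

Lemma muhat_diff (R : realType) (S A M : finType) (T dq : nat)
    (pE : traj S A T -> R) (q : 'rV[R]_dq -> traj S A T -> M -> R) t s m psi0 :
  (forall tau m psi, differentiable (fun psi' => q psi' tau m) psi) ->
  differentiable (fun psi => muhat pE q psi t s m) psi0.
Proof.
move=> hq; rewrite /muhat; apply: big_diff => tau.
apply: diffMc'; apply: diffMc; exact: hq.
Qed.

Lemma muhat_vec_diff (R : realType) (S A M : finType) (T dq : nat)
    (pE : traj S A T -> R) (q : 'rV[R]_dq -> traj S A T -> M -> R) t m psi0 :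
  (forall tau m psi, differentiable (fun psi' => q psi' tau m) psi) ->
  differentiable (fun psi => muhat_vec pE q psi t m) psi0.
Proof.
move=> hq.
have -> : (fun psi => muhat_vec pE q psi t m) =
  (fun psi => \sum_(j < #|S|) muhat pE q psi t (enum_val j) m *: (delta_mx 0 j : 'rV[R]_#|S|)).
  apply/funext => psi; rewrite [LHS]row_sum_delta; apply: eq_bigr => j _.
  by rewrite /muhat_vec mxE.
apply: big_diff => j; apply: differentiableZl; exact: muhat_diff hq.
Qed.

Lemma exp_facts (R : realType) (V : normedModType R) (K : V -> R) x v :
  differentiable K x ->
  differentiable (fun y => expR (K y)) x /\
  'D_v (fun y => expR (K y)) x = expR (K x) * 'D_v K x.
Proof. move=> dK; exact: comp_R dK (is_derive_expR (K x)). Qed.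

Lemma outer_derive (R : realType) (V : normedModType R) (M : finType)
  (p : M -> R) (F : M -> V -> R) x v :
  (forall m, differentiable (F m) x) ->
  'D_v (fun y => \sum_m p m * F m y) x = \sum_m p m * 'D_v (F m) x.
Proof.
move=> dF; rewrite big_derive; last by move=> m; exact: diffMc.
by apply: eq_bigr => m _; rewrite deriveMc.
Qed.

Theorem proposition1 (R : realType) (S A M : finType) (T dw dq : nat)
    (p : M -> R) (pE : traj S A T -> R)
    (f : 'rV[R]_dw -> S -> A -> 'rV[R]_#|S| -> M -> R)
    (q : 'rV[R]_dq -> traj S A T -> M -> R)
    (pi : 'I_T.+1 -> S -> M -> A -> R)
    (w0 : 'rV[R]_dw) (psi0 : 'rV[R]_dq) :
  is_dist p -> is_dist pE ->
  (forall s a mu m w, differentiable (fun w' => f w' s a mu m) w) ->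
  (forall w s a m mu, differentiable (fun mu' => f w s a mu' m) mu) ->
  (forall tau m psi, differentiable (fun psi' => q psi' tau m) psi) ->
  (forall psi tau m, 0 < q psi tau m) ->
  (forall psi t s m, 0 < muhat pE q psi t s m) ->
  policy_flow pi ->
  (forall tau m, traj_dist (muhat pE q psi0) pi tau m = p_ebm pE q f w0 psi0 tau m) ->
  let P := traj_dist (muhat pE q psi0) pi in
  let gw (i : 'I_dw) (tau : traj S A T) (m : M) :=
    \sum_(t < T.+1) 'D_(evec i)
       (fun w => f w (stt tau t) (act tau t) (muhat_vec pE q psi0 t m) m) w0 in
  let kappa (j : 'I_dq) (tau : traj S A T) (m : M) :=
    'D_(evec j) (fun psi => \sum_(t < T.+1)
        (f w0 (stt tau t) (act tau t) (muhat_vec pE q psi t m) m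
         + ln (muhat pE q psi t (stt tau t) m))) psi0 in
  (forall i : 'I_dw,
     'D_(evec i) (fun w => Lobj p pE q f w psi0) w0 =
     \sum_(m : M) p m * \sum_(tau : traj S A T) P tau m *
       (ln (q psi0 tau m) *
        (gw i tau m - \sum_(tau' : traj S A T) P tau' m * gw i tau' m))) /\
  (forall j : 'I_dq,
     'D_(evec j) (fun psi => Lobj p pE q f w0 psi) psi0 =
     \sum_(m : M) p m * \sum_(tau : traj S A T) P tau m *
       (ln (q psi0 tau m) *
          (kappa j tau m - \sum_(tau' : traj S A T) P tau' m * kappa j tau' m)
        + 'D_(evec j) (fun psi => ln (q psi tau m)) psi0)).
Proof.
move=> Hp HpE df_w df_mu hq qpos mpos _ Htd P gw kappa.
have Pe : forall tau m, P tau m = unnorm pE q f w0 psi0 tau m /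
     (\sum_tau' unnorm pE q f w0 psi0 tau' m) by move=> tau m; rewrite /P Htd.
split.
- move=> i.
  pose Kw tau m := fun w => \sum_(t < T.+1)
     (f w (stt tau t) (act tau t) (muhat_vec pE q psi0 t m) m
         + ln (muhat pE q psi0 t (stt tau t) m)).
  have uE : forall tau m, (fun w => unnorm pE q f w psi0 tau m) = (fun w => expR (Kw tau m w)).
    by move=> tau m; apply/funext => w; rewrite unnorm_exp // => *; exact: mpos.
  have dK : forall tau m, differentiable (Kw tau m) w0.
    move=> tau m; apply: big_diff => t.
    exact: (differentiableD (df_w _ _ _ _ w0) (differentiable_cst _ w0)).
  have DK : forall tau m, 'D_(evec i) (Kw tau m) w0 = gw i tau m.
    move=> tau m; rewrite /Kw big_derive; last first.
      move=> t; exact: (differentiableD (df_w _ _ _ _ w0) (differentiable_cst _ w0)).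
    by apply: eq_bigr => t _; rewrite deriveDc.
  have Qm : forall m, differentiable (fun w => \sum_tau p_ebm pE q f w psi0 tau m * ln (q psi0 tau m)) w0 /\
      'D_(evec i) (fun w => \sum_tau p_ebm pE q f w psi0 tau m * ln (q psi0 tau m)) w0 =
      \sum_tau P tau m * (ln (q psi0 tau m) * (gw i tau m - \sum_tau' P tau' m * gw i tau' m)).
    move=> m; have [||||dF DF] := @quot_derive R _ (traj S A T)
     (fun tau w => unnorm pE q f w psi0 tau m) (fun tau _ => ln (q psi0 tau m))
     (fun tau => gw i tau m) (w0) (evec i).
    - by move=> tau /=; rewrite uE; case: (@exp_facts R _ _ _ (evec i) (dK tau m)).
    - move=> tau /=; rewrite uE; case: (@exp_facts R _ _ _ (evec i) (dK tau m)) => _ ->.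
      by rewrite DK /Kw -unnorm_exp // => *; exact: mpos.
    - by move=> tau; exact: differentiable_cst.
    - by move=> tau /=; rewrite unnorm_exp ?expR_gt0 // => *; exact: mpos.
    split; first exact: dF.
    rewrite [LHS]DF; apply: eq_bigr => tau _.
    rewrite derive_cst addr0 Pe; congr (_ * (_ * (_ - _))).
    by apply: eq_bigr => tau' _; rewrite Pe.
  rewrite /Lobj outer_derive; last by move=> m; case: (Qm m).
  by apply: eq_bigr => m _; case: (Qm m) => _ ->.
- move=> j.
  pose Kp tau m := fun psi => \sum_(t < T.+1)
        (f w0 (stt tau t) (act tau t) (muhat_vec pE q psi t m) m
         + ln (muhat pE q psi t (stt tau t) m)).
  have uE : forall tau m, (fun psi => unnorm pE q f w0 psi tau m) = (fun psi => expR (Kp tau m psi)).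
    by move=> tau m; apply/funext => psi; rewrite unnorm_exp // => *; exact: mpos.
  have dK : forall tau m, differentiable (Kp tau m) psi0.
    move=> tau m; apply: big_diff => t.
    apply: differentiableD.
      apply: (@differentiable_comp _ _ _ _ (fun psi => muhat_vec pE q psi t m)
                 (fun mu => f w0 (stt tau t) (act tau t) mu m)).
        exact: (@muhat_vec_diff R S A M T dq pE q t m psi0 hq).
      exact: df_mu.
    have [] := @comp_R R _ _ _ psi0 _ (evec j) (@muhat_diff R S A M T dq pE q t (stt tau t) m psi0 hq)
                 (is_derive1_ln (mpos psi0 t (stt tau t) m)).
    by [].
  have dc : forall tau m, differentiable (fun psi => ln (q psi tau m)) psi0.
    move=> tau m.
    by have [] := @comp_R R _ _ _ psi0 _ (evec j) (hq tau m psi0) (is_derive1_ln (qpos psi0 tau m)).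
  have Qm : forall m, differentiable (fun psi => \sum_tau p_ebm pE q f w0 psi tau m * ln (q psi tau m)) psi0 /\
      'D_(evec j) (fun psi => \sum_tau p_ebm pE q f w0 psi tau m * ln (q psi tau m)) psi0 =
      \sum_tau P tau m * (ln (q psi0 tau m) *
          (kappa j tau m - \sum_tau' P tau' m * kappa j tau' m)
        + 'D_(evec j) (fun psi => ln (q psi tau m)) psi0).
    move=> m; have [||||dF DF] := @quot_derive R _ (traj S A T)
     (fun tau psi => unnorm pE q f w0 psi tau m) (fun tau psi => ln (q psi tau m))
     (fun tau => kappa j tau m) (psi0) (evec j).
    - by move=> tau /=; rewrite uE; case: (@exp_facts R _ _ _ (evec j) (dK tau m)).
    - move=> tau /=; rewrite uE; case: (@exp_facts R _ _ _ (evec j) (dK tau m)) => _ ->.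
      by rewrite /Kp -unnorm_exp // => *; exact: mpos.
    - by move=> tau; exact: dc.
    - by move=> tau /=; rewrite unnorm_exp ?expR_gt0 // => *; exact: mpos.
    split; first exact: dF.
    rewrite [LHS]DF; apply: eq_bigr => tau _.
    rewrite Pe; congr (_ * (_ * (_ - _) + _)).
    by apply: eq_bigr => tau' _; rewrite Pe.
  rewrite /Lobj outer_derive; last by move=> m; case: (Qm m).
  by apply: eq_bigr => m _; case: (Qm m) => _ ->.
Qed.
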